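(* Let $X$ be a finite simplicial complex whose vertices carry a labelling by $\{1,\dots,n\}$, and suppose a second labelling is given; let $\sigma:\{1,\dots,n\}\to\{1,\dots,n\}$ be the permutation such that the vertex with label $i$ in the first labelling has label $\sigma(i)$ in the second. Let $B_d$ and $\tilde B_d$ be the matrices of the boundary maps induced by the first and second labelling, respectively. Then for all maps $F:C_d(X)\to C_d(X)$ and $H:C_{d-1}(X)\to C_{d-1}(X)$ that are componentwise with odd components, $$T_\sigma^{d-1}\circ B_dFB_d^\intercal=\tilde B_dF\tilde B_d^\intercal\circ T_\sigma^{d-1},\qquad T_\sigma^{d}\circ B_d^\intercal HB_d=\tilde B_d^\intercal H\tilde B_d\circ T_\sigma^{d}.$$ In particular, a different choice of labelling gives conjugate vector fields.
   Context: A finite simplicial complex $X$ on a vertex set is a collection of nonempty subsets of the vertex set closed under taking nonempty subsets; $X_d$ is the set of its simplices with $d+1$ vertices. $C_d(X)$ is the real vector space with basis $X_d$ (ordered in a fixed way, independent of labelling) and inner product making $X_d$ orthonormal. Given a labelling of the vertices by $\{1,\dots,n\}$, a $d$-simplex whose vertices have labels $i_0<\dots<i_d$ is written $[i_0,\dots,i_d]$, and the boundary map is $\partial_d[i_0,\dots,i_d]=\sum_{k=0}^d(-1)^k[i_0,\dots,\widehat{i_k},\dots,i_d]$ (label $i_k$ omitted); its matrix in the bases $X_d,X_{d-1}$ is the boundary matrix of that labelling. For a set $A=\{i_0<\dots<i_d\}\subseteq\{1,\dots,n\}$ and a permutation $\sigma$, $\operatorname{sgn}(A,\sigma)=\operatorname{sgn}(\tau)$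 where $\tau$ is the unique permutation of $\{0,\dots,d\}$ with $\sigma(i_{\tau(0)})<\dots<\sigma(i_{\tau(d)})$. $T_\sigma^d:C_d(X)\to C_d(X)$ is the diagonal linear map with $(T^d_\sigma x)_s=\operatorname{sgn}(A_s,\sigma)x_s$, where $A_s$ is the set of labels of $s$ in the first labelling. A map $F:C_d(X)\to C_d(X)$ is componentwise with odd components if $(F(x))_s=F_s(x_s)$ for each $s\in X_d$ with each $F_s:\mathbb{R}\to\mathbb{R}$ odd. *)

(* Defs.v *)
From HB Require Import structures.
From mathcomp Require Import all_boot all_order all_algebra all_fingroup.
Set Implicit Arguments. Unset Strict Implicit. Unset Printing Implicit Defensive.
Import Order.TTheory GRing.Theory Num.Theory.
Local Open Scope ring_scope.

(* Vertices are identified with their labels in the FIRST labelling: 'I_n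
   (0-based stand-in for {1,...,n}; only the order matters). *)

Definition is_complex (n : nat) (X : {set {set 'I_n}}) : Prop :=
  set0 \notin X /\
  (forall s t : {set 'I_n}, s \in X -> t \subset s -> t != set0 -> t \in X).

Definition simp (n : nat) (X : {set {set 'I_n}}) (d : nat) :=
  {s : {set 'I_n} | (s \in X) && (#|s| == d.+1)%N}.

Definition chain (R : realFieldType) (n : nat) (X : {set {set 'I_n}}) (d : nat) :=
  {ffun simp X d -> R}.

(* Boundary matrix entry of the labelling lab (lab v = label of vertex v),
   from C_{d+1} to C_d: for s = [i_0,...,i_{d+1}] (labels sorted) and t the
   face obtained by omitting the vertex v whose label is i_k, the entry is
   (-1)^k, where k = number of vertices of s with label smaller than lab v. *)
Definition Bmat (R : realFieldType) (n : nat) (X : {set {set 'I_n}}) (d : nat)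
  (lab : 'I_n -> 'I_n) (t : simp X d) (s : simp X d.+1) : R :=
  if val t \subset val s then
    match [pick v in val s :\: val t] with
    | Some v => (-1) ^+ #|[set u in val s | (lab u < lab v)%N]|
    | None => 0
    end
  else 0.

Definition bnd (R : realFieldType) (n : nat) (X : {set {set 'I_n}}) (d : nat)
  (lab : 'I_n -> 'I_n) (c : chain R X d.+1) : chain R X d :=
  [ffun t => \sum_(s : simp X d.+1) Bmat R lab t s * c s].

Definition bndT (R : realFieldType) (n : nat) (X : {set {set 'I_n}}) (d : nat)
  (lab : 'I_n -> 'I_n) (c : chain R X d) : chain R X d.+1 :=
  [ffun s => \sum_(t : simp X d) Bmat R lab t s * c t].

(* sgn(A, sigma): A = {i_0 < ... < i_k} (enumerated increasingly by enum_val),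
   tau the permutation with sigma(i_tau(0)) < ... < sigma(i_tau(k)). *)
Definition sgnA (R : realFieldType) (n : nat) (A : {set 'I_n}) (sigma : {perm 'I_n}) : R :=
  match [pick tau : 'S_#|A| |
          [forall a : 'I_#|A|, forall b : 'I_#|A|,
             (a < b)%N ==> (sigma (enum_val (A := A) (tau a))
                            < sigma (enum_val (A := A) (tau b)))%N]] with
  | Some tau => (-1) ^+ odd_perm tau
  | None => 1
  end.

Definition Tsig (R : realFieldType) (n : nat) (X : {set {set 'I_n}}) (d : nat)
  (sigma : {perm 'I_n}) (c : chain R X d) : chain R X d :=
  [ffun s => sgnA R (val s) sigma * c s].

Definition cw_odd (R : realFieldType) (n : nat) (X : {set {set 'I_n}}) (d : nat)
  (F : chain R X d -> chain R X d) : Prop :=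
  exists f : simp X d -> R -> R,
    (forall s x, f s (- x) = - f s x) /\ (forall c s, F c s = f s (c s)).

(* Main.v *)
Require Import Defs.
From HB Require Import structures.
From mathcomp Require Import all_boot all_order all_algebra all_fingroup.
From mathcomp Require Import zify ring.
Set Implicit Arguments. Unset Strict Implicit. Unset Printing Implicit Defensive.
Import Order.TTheory GRing.Theory Num.Theory.
Local Open Scope ring_scope.

Lemma enum_val_ltn n (A : {set 'I_n}) (i j : 'I_#|A|) :
  (i < j)%N -> (enum_val i < enum_val j)%N.
Proof.
move=> ij.
have hs : sorted ltn [seq val x | x <- enum A].
  rewrite sorted_map /enum_mem -enumT.
  apply: sorted_filter; first by move=> x y z /=; exact: ltn_trans.
  have : sorted ltn [seq val x | x <- enum 'I_n] by rewrite val_enum_ord iota_ltn_sorted.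
  by rewrite sorted_map.
have jA : (j < size (enum A))%N by rewrite -cardE.
have iA : (i < size (enum A))%N by rewrite -cardE.
have e := enum_val_nth (enum_val i).
rewrite (e _ i) (e _ j).
rewrite -(nth_map _ (val (enum_val i)) val iA) -(nth_map _ (val (enum_val i)) val jA).
by apply: (sorted_ltn_nth ltn_trans) => //; rewrite inE size_map.
Qed.

Lemma enum_val_mono n (A : {set 'I_n}) (i j : 'I_#|A|) :
  (enum_val i < enum_val j)%N = (i < j)%N.
Proof.
case: (ltnP i j) => [/enum_val_ltn -> //|]; rewrite leq_eqVlt; case/orP.
  by move/eqP/val_inj => ->; rewrite ltnn.
by move/enum_val_ltn => h; apply/negbTE; rewrite -leqNgt ltnW.
Qed.

Lemma prod_sign_min (R : realFieldType) (m k : nat) :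
  \prod_(c < k) (if (c < m)%N then -1 else 1) = (-1) ^+ (minn m k) :> R.
Proof.
elim: k => [|k IH]; first by rewrite big_ord0 minn0.
rewrite big_ord_recr /= IH; case: (ltnP k m) => h.
  by rewrite (minn_idPr h) exprSr.
by rewrite mulr1 (minn_idPl (leqW h)).
Qed.
Lemma lift_ltn_self n (j : 'I_n.+1) (c : 'I_n) : (lift j c < j)%N = (c < j)%N.
Proof. rewrite /= /bump; case: leqP => h; apply/idP/idP => /= ?; lia. Qed.
Lemma lift_ltn2 n (j : 'I_n.+1) (a b : 'I_n) : (lift j a < lift j b)%N = (a < b)%N.
Proof. by rewrite /= !ltnNge leq_bump2. Qed.

Definition invprod (R : ringType) k (g : 'I_k -> nat) : R :=
  \prod_(a < k) \prod_(b < k) (if (a < b)%N && (g b < g a)%N then -1 else 1).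

Lemma sign_invprod (R : realFieldType) k (p : 'S_k) :
  (-1) ^+ p = invprod R (fun i => val (p i)).
Proof.
elim: k p => [|k IH] p.
  by rewrite /invprod big_ord0 (permS0 p) odd_perm1.
pose j := p ord0.
pose qf := fun c : 'I_k => odflt c (unlift j (p (lift ord0 c))).
have hq : forall c, p (lift ord0 c) = lift j (qf c).
  move=> c; rewrite /qf; case: unliftP => [c' -> //| e].
  by move/perm_inj: e => /eqP; rewrite eq_sym (negbTE (neq_lift _ _)).
have qinj : injective qf.
  by move=> a b e; apply: (@lift_inj _ ord0); apply: (@perm_inj _ p); rewrite !hq e.
pose q := perm qinj.
have pE : p = lift_perm ord0 j q.
  apply/permP => x; case: (unliftP ord0 x) => [x'|] ->.
    by rewrite lift_perm_lift permE hq.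
  by rewrite lift_perm_id.
rewrite {1}pE odd_lift_perm /= signr_addb signr_odd IH /invprod.
rewrite big_ord_recl big_ord_recl /= mul1r.
have -> : \prod_(i < k) (if (0 < bump 0 i)%N && (p (lift ord0 i) < p ord0)%N then -1 else 1)
    = (-1) ^+ j :> R.
  under eq_bigr do rewrite hq lift_ltn_self /=.
  have hq' : forall c, qf c = q c by move=> c; rewrite permE.
  under eq_bigr do rewrite hq'.
  rewrite (reindex_inj (@perm_inj _ q^-1)) /=.
  under eq_bigr do rewrite permKV.
  by rewrite prod_sign_min (minn_idPl _) // -ltnS.
congr (_ * _); apply: eq_bigr => a _; rewrite big_ord_recl /= mul1r.
apply: eq_bigr => b _; rewrite !hq lift_ltn2 /= !permE.
by rewrite /bump !leq0n !add1n ltnS.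
Qed.

Lemma sort_sign (R : realFieldType) k (g : 'I_k -> nat) (t : 'S_k) :
  (forall a b : 'I_k, (a < b)%N -> (g (t a) < g (t b))%N) ->
  (-1) ^+ t = invprod R g.
Proof.
move=> H; rewrite -odd_permV sign_invprod /invprod.
have key : forall x y : 'I_k, (y < x)%N = (g (t y) < g (t x))%N.
  move=> x y; case: (ltngtP y x) => [/H -> //| /H h | /val_inj ->].
    by apply/esym/negbTE; rewrite -leqNgt ltnW.
  by rewrite ltnn.
apply: eq_bigr => a _; apply: eq_bigr => b _.
by rewrite (key ((t^-1)%g a) ((t^-1)%g b)) !permKV.
Qed.

Lemma sort_exists k (g : 'I_k -> nat) : injective g ->
  exists t : 'S_k, forall a b : 'I_k, (a < b)%N -> (g (t a) < g (t b))%N.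
Proof.
move=> ginj.
pose S a := [set b | (g b < g a)%N].
have Slt : forall a, (#|S a| < k)%N.
  move=> a; suff: (#|S a| < #|[set: 'I_k]|)%N by rewrite cardsT card_ord.
  apply: proper_card.
  rewrite properT; apply/negP => /eqP e.
  by have := in_setT a; rewrite -e inE ltnn.
have Smono : forall a b, (g a < g b)%N -> (#|S a| < #|S b|)%N.
  move=> a b h; apply: proper_card; apply/properP; split.
    by apply/subsetP => x; rewrite !inE => hx; exact: ltn_trans hx h.
  by exists a; rewrite !inE ?h ?ltnn.
pose rf a := Ordinal (Slt a).
have rinj : injective rf.
  move=> a b /(congr1 val) /= e; apply: ginj.
  case: (ltngtP (g a) (g b)) => // /Smono; by rewrite e ltnn.
exists ((perm rinj)^-1)%g => a b ab.
set x := ((perm rinj)^-1)%g a; set y := ((perm rinj)^-1)%g b.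
have ex : rf x = a by rewrite /x -[rf _]permE permKV.
have ey : rf y = b by rewrite /y -[rf _]permE permKV.
case: (ltngtP (g x) (g y)) => // h.
  by move: ab; rewrite -ex -ey /= ltnNge ltnW // Smono.
by move: ab; rewrite -ex -ey /= (ginj _ _ h) ltnn.
Qed.

Lemma sgnAE (R : realFieldType) n (A : {set 'I_n}) (sigma : {perm 'I_n}) :
  sgnA R A sigma =
  \prod_(u in A) \prod_(w in A) (if (u < w)%N && (sigma w < sigma u)%N then -1 else 1).
Proof.
pose g := fun a : 'I_#|A| => val (sigma (enum_val a)).
have gE : invprod R g = \prod_(u in A) \prod_(w in A)
     (if (u < w)%N && (sigma w < sigma u)%N then -1 else 1).
  rewrite /invprod (big_enum_val (fun u : 'I_n => \prod_(w in A)
     (if (u < w)%N && (sigma w < sigma u)%N then -1 else 1) : R)).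
  apply: eq_bigr => a _.
  rewrite (big_enum_val (fun w : 'I_n =>
     (if (enum_val a < w)%N && (sigma w < sigma (enum_val a))%N then -1 else 1) : R)).
  by apply: eq_bigr => b _; rewrite enum_val_mono.
rewrite /sgnA -gE; case: pickP => [t /forallP H | none].
  apply: sort_sign => a b ab.
  by have := H a => /forallP /(_ b) /implyP; apply.
have ginj : injective g.
  by move=> a b /val_inj /perm_inj /enum_val_inj.
have [t Ht] := sort_exists ginj.
have := none t; case/negP; apply/forallP => a; apply/forallP => b.
by apply/implyP => ab; exact: Ht.
Qed.

Lemma prod_if_card (R : realFieldType) n (A : {set 'I_n}) (P : pred 'I_n) :
  \prod_(u in A) (if P u then -1 else 1) = (-1) ^+ #|[set u in A | P u]| :> R.
Proof.
rewrite -big_mkcondr -prodr_const; apply: eq_bigl => u; by rewrite !inE.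
Qed.

Lemma prod_setU1 (R : realFieldType) n (a : 'I_n) (A : {set 'I_n}) (F : 'I_n -> R) :
  a \notin A -> \prod_(i in a |: A) F i = F a * \prod_(i in A) F i.
Proof. exact: big_setU1. Qed.

Lemma prod_split (R : realFieldType) n (A : {set 'I_n}) (F G : 'I_n -> R) :
  \prod_(i in A) (F i * G i) = \prod_(i in A) F i * \prod_(i in A) G i.
Proof. exact: big_split. Qed.

Lemma sgnA_pm (R : realFieldType) n (A : {set 'I_n}) (sigma : {perm 'I_n}) :
  sgnA R A sigma = 1 \/ sgnA R A sigma = -1.
Proof.
rewrite /sgnA; case: pickP => [t _|_]; last by left.
by case: (odd_perm t); [right; rewrite expr1 | left; rewrite expr0].
Qed.

Lemma Bmat_rel (R : realFieldType) n (X : {set {set 'I_n}}) d (sigma : {perm 'I_n})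
  (t : simp X d) (s : simp X d.+1) :
  Bmat R (fun v => sigma v) t s =
  sgnA R (val t) sigma * sgnA R (val s) sigma * Bmat R id t s.
Proof.
rewrite /Bmat; case: ifP => ts; last by rewrite mulr0.
case: pickP => [v hv | _]; last by rewrite mulr0.
have /andP[_ /eqP ct] := valP t.
have /andP[_ /eqP cs] := valP s.
move: hv; rewrite inE => /andP[vt vs].
have sE : val s = v |: val t.
  apply/esym/eqP; rewrite eqEcard; apply/andP; split.
    by rewrite subUset sub1set vs ts.
  by rewrite cardsU1 vt ct cs.
rewrite sE !sgnAE; do !rewrite (prod_setU1 _ vt).
under [\prod_(i in val t) \prod_(w in v |: val t) _]eq_bigr => u _ do rewrite (prod_setU1 _ vt).
rewrite big_split /= -!prod_if_card; do !rewrite (prod_setU1 _ vt).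
rewrite !ltnn /= !mul1r.

set E := \prod_(u in val t) \prod_(w in val t) _.
have E2 : E * E = 1.
  by case: (sgnA_pm R (val t) sigma) => e; move: e; rewrite sgnAE -/E => ->; rewrite ?mulr1 ?mulrNN ?mulr1.
transitivity (E * E * \prod_(i in val t) (if (sigma i < sigma v)%N then -1 else 1)).
  by rewrite E2 mul1r.
transitivity (E * E * (\prod_(i in val t) ((if (v < i)%N && (sigma i < sigma v)%N then -1 else 1) *
   (if (i < v)%N && (sigma v < sigma i)%N then -1 else 1) * (if (i < v)%N then -1 else 1)))); last first.
  by rewrite !prod_split; ring.
congr (_ * _); apply: eq_bigr => w wt.
have wv : w != v by apply: contraNneq vt => <-.
have swv : sigma w != sigma v :> nat.
  by apply: contra wv => /eqP/val_inj/perm_inj ->.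
case: (ltngtP w v) => [wlv | vlw | /val_inj e]; last by rewrite e eqxx in wv.
  case: (ltngtP (sigma w) (sigma v)) => [a|b|/val_inj/perm_inj e]; last by rewrite e eqxx in wv.
    by rewrite /=; ring.
  by rewrite /=; ring.
case: (ltngtP (sigma w) (sigma v)) => [a|b|/val_inj/perm_inj e]; last by rewrite e eqxx in wv.
  by rewrite /=; ring.
by rewrite /=; ring.
Qed.

Lemma odd_pm (R : realFieldType) (f : R -> R) (e y : R) :
  (forall x, f (- x) = - f x) -> e = 1 \/ e = -1 -> f (e * y) = e * f y.
Proof. by move=> fo [] ->; rewrite ?mul1r // !mulN1r fo. Qed.

Theorem mainTheorem2 (R : realFieldType) (n : nat) (X : {set {set 'I_n}})
  (hX : is_complex X) (sigma : {perm 'I_n}) (d : nat)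
  (F : chain R X d.+1 -> chain R X d.+1) (H : chain R X d -> chain R X d) :
  cw_odd F -> cw_odd H ->
  (forall x : chain R X d,
     Tsig sigma (bnd id (F (bndT id x)))
     = bnd (fun v => sigma v) (F (bndT (fun v => sigma v) (Tsig sigma x)))) /\
  (forall y : chain R X d.+1,
     Tsig sigma (bndT id (H (bnd id y)))
     = bndT (fun v => sigma v) (H (bnd (fun v => sigma v) (Tsig sigma y)))).
Proof.
move=> [f [fo hF]] [h [ho hH]]; split.
  move=> x; apply/ffunP => t; rewrite !ffunE big_distrr /=; apply: eq_bigr => s _.
  rewrite !hF !ffunE.
  have -> : \sum_(t' : simp X d) Bmat R (fun v => sigma v) t' s * Tsig sigma x t'
      = sgnA R (val s) sigma * \sum_(t' : simp X d) Bmat R id t' s * x t'.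
    rewrite big_distrr /=; apply: eq_bigr => t' _; rewrite ffunE Bmat_rel.
    by case: (sgnA_pm R (val t') sigma) => ->; ring.
  rewrite (@odd_pm R (f s) _ _ (fo s) (sgnA_pm R (val s) sigma)) Bmat_rel.
  by case: (sgnA_pm R (val s) sigma) => ->; ring.
move=> y; apply/ffunP => s; rewrite !ffunE big_distrr /=; apply: eq_bigr => t _.
rewrite !hH !ffunE.
have -> : \sum_(s' : simp X d.+1) Bmat R (fun v => sigma v) t s' * Tsig sigma y s'
    = sgnA R (val t) sigma * \sum_(s' : simp X d.+1) Bmat R id t s' * y s'.
  rewrite big_distrr /=; apply: eq_bigr => s' _; rewrite ffunE Bmat_rel.
  by case: (sgnA_pm R (val s') sigma) => ->; ring.
rewrite (@odd_pm R (h t) _ _ (ho t) (sgnA_pm R (val t) sigma)) Bmat_rel.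
by case: (sgnA_pm R (val t) sigma) => ->; ring.
Qed.
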